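(* Let $X_{\Omega_-}$ and $X_{\Omega_+}$ be concave toric domains in $\mathbb{R}^4$. Suppose that for every pair of relatively prime positive integers $a,b>0$ we have $[(a,b)]_{\Omega_-}\le[(a,b)]_{\Omega_+}$. Then $\Omega_-\subset\Omega_+$.
   Context: Let $\mu:\mathbb{C}^2\to\mathbb{R}^2_{\ge0}$, $\mu(z_1,z_2)=(\pi|z_1|^2,\pi|z_2|^2)$. Let $\Omega\subset\mathbb{R}^2_{\ge0}$ be compact with $0\in\operatorname{int}(\Omega)$, whose boundary consists of the segment from $(0,0)$ to $(a(\Omega),0)$, the segment from $(0,0)$ to $(0,b(\Omega))$ (with $a(\Omega),b(\Omega)>0$), and a continuous curve $\partial_+\Omega$ from $(a(\Omega),0)$ to $(0,b(\Omega))$ meeting the axes only at its endpoints. $X_\Omega=\mu^{-1}(\Omega)$ is a concave toric domain if $\mathbb{R}^2_{\ge0}\setminus\Omega$ is convex. For $(a,b)\in\mathbb{Z}^2_{\ge0}$, $[(a,b)]_\Omega=\min\{ax+by:(x,y)\in\partial_+\Omega\}$ (in the paper this quantity is the $\Omega$-action $\mathcal{A}_\Omega(e_{a,b})$). *)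

(* Defs.v *)
From HB Require Import structures.
From mathcomp Require Import all_boot all_order all_algebra.
From mathcomp Require Import all_classical all_reals all_analysis.
Set Implicit Arguments. Unset Strict Implicit. Unset Printing Implicit Defensive.
Import Order.TTheory GRing.Theory Num.Theory.
Import numFieldNormedType.Exports.
Local Open Scope classical_set_scope.
Local Open Scope ring_scope.

Definition bdry {R : realType} (A : set (R * R)) : set (R * R) :=
  closure A `\` interior A.

Definition quadrant {R : realType} : set (R * R) :=
  [set p | 0 <= p.1 /\ 0 <= p.2].

Definition segment {R : realType} (p q : R * R) : set (R * R) :=
  [set z | exists2 t : R, 0 <= t <= 1 &
     z = ((1 - t) * p.1 + t * q.1, (1 - t) * p.2 + t * q.2)].

Definition convex_set2 {R : realType} (A : set (R * R)) : Prop :=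
  forall p q, A p -> A q -> forall t : R, 0 <= t <= 1 ->
    A ((1 - t) * p.1 + t * q.1, (1 - t) * p.2 + t * q.2).

(* Omega is a region as in the paper: compact subset of R^2_{>=0}, 0 in the
   interior of Omega relative to R^2_{>=0}, with boundary consisting of the
   segment [(0,0),(a,0)], the segment [(0,0),(0,b)], and the continuous curve
   C = d_+Omega = gamma([0,1]) from (a,0) to (0,b) meeting the axes only at its
   endpoints. *)
Definition toric_region {R : realType} (Om : set (R * R)) (a b : R)
  (C : set (R * R)) : Prop :=
  [/\ compact Om /\ (Om `<=` quadrant),
      (exists2 e : R, 0 < e & [set p | 0 <= p.1 <= e /\ 0 <= p.2 <= e] `<=` Om),
      0 < a, 0 < b &
      [/\ (exists gamma : R -> R * R,
            [/\ {within `[0, 1], continuous gamma},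
                gamma 0 = (a, 0), gamma 1 = (0, b) &
                C = gamma @` `[0, 1]]),
          (forall p, C p -> p.1 = 0 \/ p.2 = 0 -> p = (a, 0) \/ p = (0, b)) &
          bdry Om = segment (0, 0) (a, 0) `|` segment (0, 0) (0, b) `|` C]].

Definition concave_toric {R : realType} (Om : set (R * R)) (a b : R)
  (C : set (R * R)) : Prop :=
  toric_region Om a b C /\ convex_set2 (quadrant `\` Om).

(* [(m,n)]_Omega = min { m x + n y : (x,y) in d_+Omega }  (the minimum exists
   by compactness; we write it as the infimum) *)
Definition omega_action {R : realType} (C : set (R * R)) (m n : nat) : R :=
  inf [set m%:R * p.1 + n%:R * p.2 | p in C].

(* Main.v *)
Require Import Defs.
From HB Require Import structures.
From mathcomp Require Import all_boot all_order all_algebra.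
From mathcomp Require Import all_classical all_reals all_analysis.
From mathcomp Require Import ring lra.
Import Order.TTheory GRing.Theory Num.Theory.
Import numFieldNormedType.Exports.
Local Open Scope classical_set_scope.
Local Open Scope ring_scope.
Set Implicit Arguments. Unset Strict Implicit. Unset Printing Implicit Defensive.
Section S.
Variable R : realType.
Implicit Types (Om C : set (R * R)) (a b : R).

Lemma addBKg (u v : R) : u + (v - u) = v.
Proof. by rewrite addrC subrK. Qed.

Lemma nbhs2P (x : R * R) (P : set (R * R)) :
  nbhs x P <-> exists2 e : R, 0 < e & forall y : R * R, `|x.1 - y.1| < e -> `|x.2 - y.2| < e -> P y.
Proof.
rewrite nbhs_ballP; split.
  by case=> e /= e0 H; exists e => // y h1 h2; apply: H; split.
by case=> e e0 H; exists e => //= y [h1 h2]; exact: H.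
Qed.

Lemma closure2P (A : set (R * R)) x :
  closure A x <-> forall e : R, 0 < e -> exists y, A y /\ `|x.1 - y.1| < e /\ `|x.2 - y.2| < e.
Proof.
split.
  move=> H e e0; have [y [Ay By]] := H [set y | `|x.1 - y.1| < e /\ `|x.2 - y.2| < e] (proj2 (nbhs2P _ _) (ex_intro2 _ _ e e0 (fun y h1 h2 => conj h1 h2))).
  by exists y.
move=> H B /nbhs2P [e e0 HB]; have [y [Ay [h1 h2]]] := H e e0.
by exists y; split => //; exact: HB.
Qed.

Lemma ct_closed Om : compact Om -> closed Om.
Proof. by move=> c; apply: compact_closed. Qed.

Lemma ct_bounded Om : compact Om -> Om `<=` quadrant ->
  exists2 M : R, 1 <= M & forall x, Om x -> [/\ 0 <= x.1, x.1 <= M, 0 <= x.2 & x.2 <= M].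
Proof.
move=> cOm sq; have := compact_bounded cOm.
case=> M0 [M0r HM]; exists (`|M0| + 1); first by rewrite lerDr.
move=> x Ox; have := HM (`|M0| + 1); rewrite (@le_lt_trans _ _ `|M0|) ?real_ler_norm ?ltrDl //.
move=> /(_ isT) /(_ x Ox).
move=> /= hx; move: hx; rewrite [X in X <= _]prod_normE => hx; have [s1 s2] := sq x Ox.
move: hx; rewrite ge_max => /andP[h1 h2].
by split => //; [exact: le_trans (ler_norm _) h1 | exact: le_trans (ler_norm _) h2].
Qed.
Lemma up_closed Om a b C : concave_toric Om a b C -> forall x v : R * R,
  quadrant x -> ~ Om x -> 0 <= v.1 -> 0 <= v.2 -> ~ Om (x.1 + v.1, x.2 + v.2).
Proof.
move=> [[[cOm sq] _ _ _ _] cvx] x v qx nOx v1 v2.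
have [M M1 HM] := ct_bounded cOm sq.
have [x1 x2] := qx.
have [v0|vpos] : (v.1 + v.2 = 0) \/ (0 < v.1 + v.2).
  by case: (ltrgt0P (v.1 + v.2)) => h; [right|lra|left].
  have -> : v.1 = 0 by lra.
  have -> : v.2 = 0 by lra.
  by rewrite !addr0; case: (x) nOx.
have [L [L1 Lv]] : exists L : R, 1 <= L /\ L * v.1 + L * v.2 = 2 * M + 1 + (v.1 + v.2).
  exists ((2 * M + 1) / (v.1 + v.2) + 1); split; first by rewrite lerDr divr_ge0 //; lra.
  by rewrite -mulrDr mulrDl mulfVK ?mul1r //; apply/negP => /eqP h; lra.
have L0 : L != 0 by apply/negP => /eqP h; move: L1; rewrite h; lra.
have qy : quadrant (x.1 + L * v.1, x.2 + L * v.2) by split => /=; nra.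
have nOy : ~ Om (x.1 + L * v.1, x.2 + L * v.2).
  by move=> /HM [/= h1 h2 h3 h4]; lra.
pose y := (x.1 + L * v.1, x.2 + L * v.2).
have t01 : 0 <= L^-1 <= 1.
  by apply/andP; split; [rewrite invr_ge0; lra | rewrite invf_le1; lra].
have := cvx x y (conj qx nOx) (conj qy nOy) L^-1 t01.
have e1 : (1 - L^-1) * x.1 + L^-1 * y.1 = x.1 + v.1 by rewrite /y /= mulrDr mulrA mulVf // mul1r addrA mulrBl mul1r subrK.
have e2 : (1 - L^-1) * x.2 + L^-1 * y.2 = x.2 + v.2 by rewrite /y /= mulrDr mulrA mulVf // mul1r addrA mulrBl mul1r subrK.
by rewrite e1 e2 => -[].
Qed.

Lemma down_closed Om a b C : concave_toric Om a b C -> forall p y : R * R,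
  Om p -> 0 <= y.1 <= p.1 -> 0 <= y.2 <= p.2 -> Om y.
Proof.
move=> H p y Op /andP[y1 yp1] /andP[y2 yp2]; apply: contrapT => nOy.
have := up_closed H (conj y1 y2) nOy (v := (p.1 - y.1, p.2 - y.2)).
rewrite /= !subr_ge0 => /(_ yp1 yp2); rewrite !addBKg.
by case: (p) Op.
Qed.
Lemma C_Om Om a b C : concave_toric Om a b C -> forall c, C c -> Om c.
Proof.
move=> [[[cOm sq] _ _ _ [_ _ bd]] _] c Cc.
have : bdry Om c by rewrite bd; right.
case=> + _; move/closure_id: (ct_closed cOm) => <-; done.
Qed.

Lemma not_interior_axis (Om : set (R * R)) p : Om `<=` quadrant ->
  (p.1 = 0 \/ p.2 = 0) -> ~ interior Om p.
Proof.
move=> sq hp /nbhs2P [e e0 He].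
case: hp => hp.
  have : Om (- (e / 2), p.2).
    by apply: He => /=; [rewrite hp sub0r opprK gtr0_norm; lra | rewrite subrr normr0].
  by move=> /sq [/= h _]; lra.
have : Om (p.1, - (e / 2)).
  by apply: He => /=; [rewrite subrr normr0 | rewrite hp sub0r opprK gtr0_norm; lra].
by move=> /sq [/= _ h]; lra.
Qed.

Lemma axis_bdry Om a b C : concave_toric Om a b C -> forall p,
  Om p -> p.2 = 0 -> p.1 <= a.
Proof.
move=> [[[cOm sq] _ a0 b0 [_ ax bd]] _] p Op p2.
have : bdry Om p.
  by split; [exact: subset_closure | exact: not_interior_axis (or_intror p2)].
rewrite bd => -[[[t /andP[t0 t1] ->]|[t /andP[t0 t1] ->]]|Cp] /=.
- by rewrite mulr0 add0r; nra.
- by rewrite !mulr0 addr0; lra.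
- by case: (ax p Cp (or_intror p2)) => -> /=; lra.
Qed.

Lemma axis_bdry2 Om a b C : concave_toric Om a b C -> forall p,
  Om p -> p.1 = 0 -> p.2 <= b.
Proof.
move=> [[[cOm sq] _ a0 b0 [_ ax bd]] _] p Op p1.
have : bdry Om p.
  by split; [exact: subset_closure | exact: not_interior_axis (or_introl p1)].
rewrite bd => -[[[t /andP[t0 t1] ->]|[t /andP[t0 t1] ->]]|Cp] /=.
- by rewrite !mulr0 addr0; lra.
- by rewrite mulr0 add0r; nra.
- by case: (ax p Cp (or_introl p1)) => -> /=; lra.
Qed.
Lemma within_fst (g : R -> R * R) (A : set R) :
  {within A, continuous g} -> {within A, continuous (fun s => (g s).1)}.
Proof.
move=> gc x; apply: (@continuous_comp _ _ _ (from_subspace A g) fst); first exact: gc.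
exact: cvg_fst.
Qed.

Lemma within_snd (g : R -> R * R) (A : set R) :
  {within A, continuous g} -> {within A, continuous (fun s => (g s).2)}.
Proof.
move=> gc x; apply: (@continuous_comp _ _ _ (from_subspace A g) snd); first exact: gc.
exact: cvg_snd.
Qed.

End S.

Section S.
Variable R : realType.
Implicit Types (Om C : set (R * R)) (a b : R).
Lemma ge0_cases (x : R) : 0 <= x -> x = 0 \/ 0 < x.
Proof. by rewrite le_eqVlt => /orP[/eqP <-|]; [left|right]. Qed.

Lemma within_lin (g : R -> R * R) (A : set R) (u v : R) :
  {within A, continuous g} -> {within A, continuous (fun s => (g s).1 * u - (g s).2 * v)}.
Proof.
move=> gc x.
apply: (@continuousB _ _ _ (fun s : subspace A => (g s).1 * u) (fun s : subspace A => (g s).2 * v)).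
  apply: (@continuous_comp _ _ _ (from_subspace A (fun s => (g s).1)) ( *%R^~ u)).
    exact: within_fst.
  exact: mulrr_continuous.
apply: (@continuous_comp _ _ _ (from_subspace A (fun s => (g s).2)) ( *%R^~ v)).
  exact: within_snd.
exact: mulrr_continuous.
Qed.

Lemma axis_contra Om a b C : concave_toric Om a b C -> forall u0, 0 <= u0 -> u0 < a ->
  (forall w1 w2, 0 < w1 -> 0 < w2 -> ~ Om (u0 + w1, w2)) -> False.
Proof.
move=> H u0 u00 u0a Hw; have H' := H.
case: H => [[[cOm sq] _ a0 b0 [[g [gc g0 g1 Cg]] ax bd]] _].
have := IVT (f := fun s => (g s).1) (v := (u0 + a) / 2) ler01 (within_fst gc).
rewrite g0 g1 /= ge_min le_max.
case. by apply/andP; split; apply/orP; [right|left]; lra.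
move=> s sI gs.
have Cc : C (g s) by rewrite Cg; exists s.
have Oc := C_Om H' Cc.
have [_ c2] := sq _ Oc.
case: (ge0_cases c2) => h.
  by case: (ax _ Cc (or_intror h)) => e; rewrite e /= in gs; lra.
apply: (Hw ((u0 + a) / 2 - u0) (g s).2) => //; first lra.
by rewrite addrC subrK -gs; case: (g s) Oc.
Qed.

Lemma axis_contra2 Om a b C : concave_toric Om a b C -> forall u0, 0 <= u0 -> u0 < b ->
  (forall w1 w2, 0 < w1 -> 0 < w2 -> ~ Om (w1, u0 + w2)) -> False.
Proof.
move=> H u0 u00 u0b Hw; have H' := H.
case: H => [[[cOm sq] _ a0 b0 [[g [gc g0 g1 Cg]] ax bd]] _].
have := IVT (f := fun s => (g s).2) (v := (u0 + b) / 2) ler01 (within_snd gc).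
rewrite g0 g1 /= ge_min le_max.
case. by apply/andP; split; apply/orP; [left|right]; lra.
move=> s sI gs.
have Cc : C (g s) by rewrite Cg; exists s.
have Oc := C_Om H' Cc.
have [c1 _] := sq _ Oc.
case: (ge0_cases c1) => h.
  by case: (ax _ Cc (or_introl h)) => e; rewrite e /= in gs; lra.
apply: (Hw (g s).1 ((u0 + b) / 2 - u0)) => //; first lra.
by rewrite addrC subrK -gs; case: (g s) Oc.
Qed.
Lemma ray Om a b C : concave_toric Om a b C -> forall x, quadrant x -> ~ Om x ->
  exists2 y, C y & y.1 <= x.1 /\ y.2 <= x.2.
Proof.
move=> H x qx nOx; have H' := H.
case: H => [[[cOm sq] _ a0 b0 [[g [gc g0 g1 Cg]] ax bd]] _].
have [x1 x2] := qx.
have := IVT (f := fun s => (g s).1 * x.2 - (g s).2 * x.1) (v := 0) ler01 (within_lin (u := x.2) (v := x.1) gc).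
rewrite g0 g1 /= !mul0r ge_min le_max.
case. by apply/andP; split; apply/orP; [right|left]; nra.
move=> s sI hs.
have Cc : C (g s) by rewrite Cg; exists s.
have Oc := C_Om H' Cc.
have [c1 c2] := sq _ Oc.
exists (g s) => //.
have key : forall v : R * R, 0 <= v.1 -> 0 <= v.2 -> g s = (x.1 + v.1, x.2 + v.2) -> False.
  by move=> v v1 v2 e; apply: (up_closed H' qx nOx v1 v2); rewrite -e.
split.
  case: (leP (g s).1 x.1) => // h1; exfalso.
  apply: (key ((g s).1 - x.1, (g s).2 - x.2)) => /=; [lra | nra | ].
  by rewrite !addBKg; case: (g s).
case: (leP (g s).2 x.2) => // h1; exfalso.
apply: (key ((g s).1 - x.1, (g s).2 - x.2)) => /=; [nra | lra | ].
by rewrite !addBKg; case: (g s).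
Qed.
Lemma closure_up Om a b C : concave_toric Om a b C -> forall d v : R * R,
  closure (quadrant `\` Om) d -> 0 <= v.1 -> 0 <= v.2 ->
  closure (quadrant `\` Om) (d.1 + v.1, d.2 + v.2).
Proof.
move=> H d v /closure2P cd v1 v2; apply/closure2P => e e0.
have [k [[qk nOk] [h1 h2]]] := cd e e0.
have ee : forall u w y : R, u + y - (w + y) = u - w by move=> u w y; ring.
exists (k.1 + v.1, k.2 + v.2); split; last by rewrite /= !ee.
split; last by move=> O; exact: (up_closed H qk nOk v1 v2 O).
by case: qk => k1 k2; split => /=; lra.
Qed.

Lemma cvx_lt (u u' t e : R) : -e < u < e -> -e < u' < e -> 0 <= t <= 1 ->
  -e < (1 - t) * u + t * u' < e.
Proof.
move=> /andP[a1 a2] /andP[b1 b2] /andP[t0 t1].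
have hM1 : u <= Num.max u u' by rewrite le_max lexx.
have hM2 : u' <= Num.max u u' by rewrite le_max lexx orbT.
have hm1 : Num.min u u' <= u by rewrite ge_min lexx.
have hm2 : Num.min u u' <= u' by rewrite ge_min lexx orbT.
have hM : Num.max u u' < e by rewrite gt_max a2 b2.
have hm : - e < Num.min u u' by rewrite lt_min a1 b1.
apply/andP; split; nra.
Qed.

Lemma closure_cvx Om a b C : concave_toric Om a b C -> forall d d' : R * R, forall t : R,
  closure (quadrant `\` Om) d -> closure (quadrant `\` Om) d' -> 0 <= t <= 1 ->
  closure (quadrant `\` Om) ((1 - t) * d.1 + t * d'.1, (1 - t) * d.2 + t * d'.2).
Proof.
move=> [_ cvx] d d' t /closure2P cd /closure2P cd' t01; apply/closure2P => e e0.
have [k [Kk [h1 h2]]] := cd e e0.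
have [k' [Kk' [h1' h2']]] := cd' e e0.
exists ((1 - t) * k.1 + t * k'.1, (1 - t) * k.2 + t * k'.2); split; first exact: cvx.
move: h1 h2 h1' h2'; rewrite /= !ltr_norml => h1 h2 h1' h2'.
have E : forall x y x' y' : R, (1 - t) * x + t * x' - ((1 - t) * y + t * y') = (1 - t) * (x - y) + t * (x' - y').
  by move=> *; ring.
by rewrite !E; split; apply: cvx_lt.
Qed.

Lemma C_closure Om a b C : concave_toric Om a b C -> forall c, C c ->
  closure (quadrant `\` Om) c.
Proof.
move=> H c Cc; have H' := H.
case: H => [[[cOm sq] _ a0 b0 [_ ax bd]] _].
have Oc := C_Om H' Cc; have [c1 c2] := sq _ Oc.
case: (ltrgt0P c.2) => hc2; last first.
- case: (ax _ Cc (or_intror hc2)) => ec; last by rewrite ec /= in hc2; lra.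
  rewrite ec; apply/closure2P => e e0; exists (a + e / 2, 0); split; last first.
    by rewrite /= subrr normr0 opprD addrA subrr add0r normrN gtr0_norm; lra.
  split; first by split => /=; lra.
  by move=> /(axis_bdry H') /= /(_ erefl); lra.
- lra.
case: (ltrgt0P c.1) => hc1; last first.
- case: (ax _ Cc (or_introl hc1)) => ec; first by rewrite ec /= in hc1; lra.
  rewrite ec; apply/closure2P => e e0; exists (0, b + e / 2); split; last first.
    by rewrite /= subrr normr0 opprD addrA subrr add0r normrN gtr0_norm; lra.
  split; first by split => /=; lra.
  by move=> /(axis_bdry2 H') /= /(_ erefl); lra.
- lra.
have : bdry Om c by rewrite bd; right.
case=> _ nint; apply/closure2P => e e0; apply: contrapT => hne; apply: nint.
apply/nbhs2P; exists (Num.min e (Num.min c.1 c.2)); first by rewrite !lt_min e0 hc1 hc2.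
move=> y; rewrite !lt_min !ltr_norml => /and3P[/andP[? ?] /andP[? ?] /andP[? ?]].
move=> /and3P[/andP[? ?] /andP[? ?] /andP[? ?]].
apply: contrapT => nOy; apply: hne; exists y; split.
  by split => //; split; lra.
by rewrite !ltr_norml; split; apply/andP; split; lra.
Qed.
Lemma sqdist_cont (z : R * R) :
  continuous (fun d : R * R => (d.1 - z.1) * (d.1 - z.1) + (d.2 - z.2) * (d.2 - z.2)).
Proof.
move=> x.
apply: (@continuousD _ _ _ (fun d : R * R => (d.1 - z.1) * (d.1 - z.1)) (fun d : R * R => (d.2 - z.2) * (d.2 - z.2))).
  apply: (@continuousM _ _ (fun d : R * R => (d.1 - z.1)) (fun d : R * R => (d.1 - z.1)));
  apply: (@continuousB _ _ _ fst (fun=> z.1)); [exact: cvg_fst | exact: cst_continuous | exact: cvg_fst | exact: cst_continuous].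
apply: (@continuousM _ _ (fun d : R * R => (d.2 - z.2)) (fun d : R * R => (d.2 - z.2)));
apply: (@continuousB _ _ _ snd (fun=> z.2)); [exact: cvg_snd | exact: cst_continuous | exact: cvg_snd | exact: cst_continuous].
Qed.
Lemma inbox (N : R) (d : R * R) :
  (`[0, N] `*` `[0, N]) d <-> (0 <= d.1 <= N) /\ (0 <= d.2 <= N).
Proof. by rewrite /setX /= !in_itv. Qed.
Lemma box_compact (N : R) : compact (`[0, N] `*` `[0, N] : set (R * R)).
Proof. by apply: compact_setX; exact: segment_compact. Qed.
Lemma cvx_box (x y l N : R) : 0 <= x <= N -> 0 <= y <= N -> 0 <= l <= 1 ->
  0 <= (1 - l) * x + l * y <= N.
Proof. move=> /andP[? ?] /andP[? ?] /andP[? ?]; apply/andP; split; nra. Qed.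

Lemma lam_ex (al Q : R) : 0 < al -> 0 <= Q -> exists l : R, [/\ 0 < l, l <= 1 & l * Q < al].
Proof.
move=> a0 Q0; exists (al / (Q + al)); split.
- by rewrite divr_gt0 //; lra.
- by rewrite ler_pdivrMr; lra.
- by rewrite mulrAC ltr_pdivrMr; nra.
Qed.

Lemma sep Om a b C : concave_toric Om a b C -> forall (p : R * R) (t : R), Om p -> 0 < t -> t < 1 ->
  exists l1 l2 eta : R, [/\ 0 <= l1, 0 <= l2, 0 < eta &
    forall c, C c -> l1 * (t * p.1) + l2 * (t * p.2) + eta <= l1 * c.1 + l2 * c.2].
Proof.
move=> H p t Op t0 t1; have H' := H.
case: H => [[[cOm sq] _ a0 b0 _] _].
have [p1 p2] := sq _ Op.
have addBK : forall u v : R, u + (v - u) = v by move=> u v; rewrite addrC subrK.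
have nz : ~ closure (quadrant `\` Om) (t * p.1, t * p.2).
  move=> /closure2P cz.
  have up : forall w1 w2, 0 < w1 -> 0 < w2 -> ~ Om (t * p.1 + w1, t * p.2 + w2).
    move=> w1 w2 w10 w20.
    have [k [[qk nOk] []]] := cz (Num.min w1 w2) (ltac:(by rewrite lt_min w10 w20)).
    rewrite /= !lt_min !ltr_norml => /andP[/andP[? ?] /andP[? ?]] /andP[/andP[? ?] /andP[? ?]].
    have := up_closed H' qk nOk (v := (t * p.1 + w1 - k.1, t * p.2 + w2 - k.2)).
    by rewrite /= !addBK; apply; lra.
  case: (eqVneq p.2 0) => hp2.
    have pa := axis_bdry H' Op hp2.
    apply: (axis_contra H' (u0 := t * p.1)); [nra | nra | ].
    by move=> w1 w2 w10 w20; have := up w1 w2 w10 w20; rewrite hp2 mulr0 add0r.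
  case: (eqVneq p.1 0) => hp1.
    have pb := axis_bdry2 H' Op hp1.
    apply: (axis_contra2 H' (u0 := t * p.2)); [nra | nra | ].
    by move=> w1 w2 w10 w20; have := up w1 w2 w10 w20; rewrite hp1 mulr0 add0r.
  have hp1' : 0 < p.1 by rewrite lt_neqAle eq_sym hp1 p1.
  have hp2' : 0 < p.2 by rewrite lt_neqAle eq_sym hp2 p2.
  have := up ((1 - t) * p.1) ((1 - t) * p.2); rewrite !mulr_gt0 ?subr_gt0 //.
  have e : forall u : R, t * u + (1 - t) * u = u by move=> u; ring.
  by rewrite !e => /(_ isT isT); case: (p) Op.
have [M M1 HM] := ct_bounded cOm sq.
pose N := 4 * (M + 1).
pose D := (`[0, N] `*` `[0, N]) `&` closure (quadrant `\` Om).
have cD : compact D by apply: compact_closedI; [exact: box_compact | exact: closed_closure].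
have q0K : (quadrant `\` Om) (M + 1, M + 1).
  by split; [split => /=; lra | move=> /HM [/= _ h _ _]; lra].
have Dq0 : D (M + 1, M + 1).
  split; last exact: subset_closure.
  by apply/inbox; split; apply/andP; split => /=; rewrite /N; lra.
have D0 : D !=set0 by exists (M + 1, M + 1).
have [d0 d0D fmin] := compact_EVT_min D0 cD (continuous_subspaceT (@sqdist_cont (t * p.1, t * p.2))).
have minf : forall d, D d -> 
   (d0.1 - t * p.1) * (d0.1 - t * p.1) + (d0.2 - t * p.2) * (d0.2 - t * p.2) <=
   (d.1 - t * p.1) * (d.1 - t * p.1) + (d.2 - t * p.2) * (d.2 - t * p.2).
  by move=> d Dd; exact: (fmin d (mem_set Dd)).
have Dd0 : D d0 := set_mem d0D.
have [/inbox [/andP[d01 d01'] /andP[d02 d02']] cd0] := Dd0.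
have [_ pM1 _ pM2] := HM _ Op.
have z1M : t * p.1 <= M by nra.
have z2M : t * p.2 <= M by nra.
have fq := minf _ Dq0; rewrite /= in fq.
have z10 : 0 <= t * p.1 by nra.
have z20 : 0 <= t * p.2 by nra.
have s1 : 0 <= (d0.1 - t * p.1) * (d0.1 - t * p.1) by rewrite -expr2 sqr_ge0.
have s2 : 0 <= (d0.2 - t * p.2) * (d0.2 - t * p.2) by rewrite -expr2 sqr_ge0.
have r1 : (M + 1 - t * p.1) * (M + 1 - t * p.1) <= (M + 1) * (M + 1) by nra.
have r2 : (M + 1 - t * p.2) * (M + 1 - t * p.2) <= (M + 1) * (M + 1) by nra.
have b1 : (d0.1 - t * p.1) * (d0.1 - t * p.1) <= 2 * ((M + 1) * (M + 1)) by lra.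
have b2 : (d0.2 - t * p.2) * (d0.2 - t * p.2) <= 2 * ((M + 1) * (M + 1)) by lra.
have d0b1 : d0.1 <= 3 * (M + 1) by nra.
have d0b2 : d0.2 <= 3 * (M + 1) by nra.
have var : forall d, D d ->
    0 <= (d0.1 - t * p.1) * (d.1 - d0.1) + (d0.2 - t * p.2) * (d.2 - d0.2).
  move=> d Dd; case: (lerP 0 ((d0.1 - t * p.1) * (d.1 - d0.1) + (d0.2 - t * p.2) * (d.2 - d0.2))) => // hneg.
  exfalso.
  have [/inbox [/andP[d1 d1'] /andP[d2 d2']] cd] := Dd.
  set S := _ + _ in hneg.
  set Q := (d.1 - d0.1) * (d.1 - d0.1) + (d.2 - d0.2) * (d.2 - d0.2).
  have Q0 : 0 <= Q by rewrite /Q addr_ge0 // -expr2 sqr_ge0.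
  have al0 : 0 < - S by rewrite oppr_gt0.
  have [lam [l0 l1 lQ]] := lam_ex al0 Q0.
  have Ddl : D ((1 - lam) * d0.1 + lam * d.1, (1 - lam) * d0.2 + lam * d.2).
    split; last by apply: (closure_cvx H' cd0 cd); rewrite (ltW l0) l1.
    by apply/inbox; split; apply: cvx_box => //; apply/andP; split => //; apply: ltW.
  have := minf _ Ddl; rewrite /=.
  have E : forall u v w : R, ((1 - lam) * u + lam * v - w) * ((1 - lam) * u + lam * v - w) =
     (u - w) * (u - w) + 2 * lam * ((u - w) * (v - u)) + lam * lam * ((v - u) * (v - u)).
    by move=> u v w; ring.
  rewrite !E => h.
  have h2 : 0 <= 2 * lam * S + lam * lam * Q by rewrite /S /Q; lra.
  have h3 : lam * (lam * Q) < lam * (- S) by rewrite ltr_pM2l.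
  have h4 : lam * S < 0 by rewrite pmulr_rlt0.
  lra.
pose l1 := d0.1 - t * p.1.
pose l2 := d0.2 - t * p.2.
have l1p : 0 <= l1.
  have Dd : D (d0.1 + 1, d0.2 + 0).
    split; last by apply: (closure_up H' (v := (1, 0))) => //=; lra.
    by apply/inbox; split; apply/andP; split => /=; rewrite /N; lra.
  by have := var _ Dd; rewrite /l1 /=; lra.
have l2p : 0 <= l2.
  have Dd : D (d0.1 + 0, d0.2 + 1).
    split; last by apply: (closure_up H' (v := (0, 1))) => //=; lra.
    by apply/inbox; split; apply/andP; split => /=; rewrite /N; lra.
  by have := var _ Dd; rewrite /l2 /=; lra.
exists l1, l2, (l1 * l1 + l2 * l2); split => //.
  case: (lerP (l1 * l1 + l2 * l2) 0) => // h; exfalso.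
  have e1 : d0.1 = t * p.1 by rewrite /l1 in h; nra.
  have e2 : d0.2 = t * p.2 by rewrite /l2 in h; nra.
  by apply: nz; rewrite -e1 -e2; case: (d0) cd0.
move=> c Cc.
have Dc : D c.
  split; last exact: C_closure H' _ Cc.
  have [? ? ? ?] := HM _ (C_Om H' Cc).
  by apply/inbox; split; apply/andP; split; rewrite /N; lra.
by have := var _ Dc; rewrite /l1 /l2; lra.
Qed.
Lemma intdir (l1 l2 eta Mx z1 z2 : R) (S : set (R * R)) :
  0 <= l1 -> 0 <= l2 -> 0 < eta -> 0 <= Mx ->
  (forall c, S c -> 0 <= c.1 <= Mx /\ 0 <= c.2 <= Mx) -> 0 <= z1 <= Mx -> 0 <= z2 <= Mx ->
  (forall c, S c -> l1 * z1 + l2 * z2 + eta <= l1 * c.1 + l2 * c.2) ->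
  exists m n : nat, [/\ (0 < m)%N, (0 < n)%N, coprime m n &
    forall c, S c -> m%:R * z1 + n%:R * z2 < m%:R * c.1 + n%:R * c.2].
Proof.
move=> l10 l20 e0 M0 HS /andP[z10 z1M] /andP[z20 z2M] Hsep.
pose N := (Num.truncn (2 * Mx / eta)).+1.
have NR : 2 * Mx < N%:R * eta.
  have := truncn_itv (ltac:(by rewrite divr_ge0 //; lra) : 0 <= 2 * Mx / eta).
  by move=> /andP[_]; rewrite -/N ltr_pdivrMr.
have N0 : 0 <= (N%:R : R) by [].
pose m0 := (Num.truncn (N%:R * l1)).+1.
pose n0 := (Num.truncn (N%:R * l2)).+1.
have [m0a m0b] : N%:R * l1 < m0%:R /\ (m0%:R : R) <= N%:R * l1 + 1.
  have := truncn_itv (mulr_ge0 N0 l10); rewrite /m0 => /andP[h1 h2].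
  by split => //; rewrite -addn1 natrD; lra.
have [n0a n0b] : N%:R * l2 < n0%:R /\ (n0%:R : R) <= N%:R * l2 + 1.
  have := truncn_itv (mulr_ge0 N0 l20); rewrite /n0 => /andP[h1 h2].
  by split => //; rewrite -addn1 natrD; lra.
have key : forall c, S c -> m0%:R * z1 + n0%:R * z2 < m0%:R * c.1 + n0%:R * c.2.
  move=> c Sc; have [/andP[c10 c1M] /andP[c20 c2M]] := HS c Sc.
  have hs := Hsep c Sc.
  have h1 : N%:R * eta <= N%:R * (l1 * c.1 + l2 * c.2 - l1 * z1 - l2 * z2) by nra.
  have h2 : (m0%:R - N%:R * l1) * (c.1 - z1) >= - Mx by nra.
  have h3 : (n0%:R - N%:R * l2) * (c.2 - z2) >= - Mx by nra.
  nra.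
pose g := gcdn m0 n0.
have g0 : (0 < g)%N by rewrite gcdn_gt0.
exists (m0 %/ g)%N, (n0 %/ g)%N.
have em : (m0 %/ g * g = m0)%N by rewrite divnK // dvdn_gcdl.
have en : (n0 %/ g * g = n0)%N by rewrite divnK // dvdn_gcdr.
split.
- by rewrite divn_gt0 // dvdn_leq // dvdn_gcdl.
- by rewrite divn_gt0 // dvdn_leq // dvdn_gcdr.
- by rewrite /coprime -(eqn_pmul2r g0) mul1n muln_gcdl em en.
move=> c Sc; have k := key c Sc; rewrite -em -en !natrM in k.
have gR : 0 < (g%:R : R) by rewrite ltr0n.
set mm := ((m0 %/ g)%N)%:R in k *; set nn := ((n0 %/ g)%N)%:R in k *.
have E : forall u v : R, mm * g%:R * u + nn * g%:R * v = g%:R * (mm * u + nn * v).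
  by move=> u v; ring.
by rewrite !E ltr_pM2l in k.
Qed.
End S.

Unset Implicit Arguments.

Theorem lemma3p10 (R : realType)
  (Om_m : set (R * R)) (a_m b_m : R) (C_m : set (R * R))
  (Om_p : set (R * R)) (a_p b_p : R) (C_p : set (R * R)) :
  concave_toric Om_m a_m b_m C_m ->
  concave_toric Om_p a_p b_p C_p ->
  (forall m n : nat, (0 < m)%N -> (0 < n)%N -> coprime m n ->
     omega_action C_m m n <= omega_action C_p m n) ->
  Om_m `<=` Om_p.
Proof.
move=> Hm Hp Hineq p Omp; apply: contrapT => nOpp.
have Hm' := Hm; have Hp' := Hp.
case: Hm => [[[cOm sqm] _ am0 bm0 [[gm [_ gm0 _ Cgm]] _ _]] _].
case: Hp => [[[cOp sqp] [e e0 boxp] ap0 bp0 _] _].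
have [p1 p2] := sqm _ Omp.
have [r [r0 Hr]] : exists r : R, 0 < r /\ forall y : R * R,
    `|p.1 - y.1| < r -> `|p.2 - y.2| < r -> ~ Om_p y.
  have : ~ closure Om_p p by move/closure_id: (ct_closed cOp) => <-.
  move/closure2P => h; apply: contrapT => hn; apply: h => r r0.
  apply: contrapT => hn2; apply: hn; exists r; split => // y h1 h2 Oy.
  by apply: hn2; exists y.
have pp : 0 < p.1 + p.2.
  case: (lerP (p.1 + p.2) 0) => // h; exfalso; apply: nOpp; apply: boxp => /=.
  by split; apply/andP; split; lra.
have [s [s0 sD]] : exists s : R, 0 < s /\ s * (2 * (p.1 + p.2) + 2 * r) = r.
  exists (r / (2 * (p.1 + p.2) + 2 * r)); split; first by rewrite divr_gt0 //; lra.
  by rewrite mulfVK //; apply/negP => /eqP h; lra.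
have s1 : s < 1 / 2 by nra.
have qx : quadrant ((1 - s) * p.1, (1 - s) * p.2) by split => /=; nra.
have nOx : ~ Om_p ((1 - s) * p.1, (1 - s) * p.2).
  apply: Hr => /=.
    rewrite (_ : p.1 - (1 - s) * p.1 = s * p.1); last by ring.
    by rewrite ger0_norm; nra.
  rewrite (_ : p.2 - (1 - s) * p.2 = s * p.2); last by ring.
  by rewrite ger0_norm; nra.
have [y Cy [/= y1 y2]] := ray Hp' qx nOx.
have [l1 [l2 [eta [l10 l20 eta0 Hsep]]]] := sep Hm' Omp (t := 1 - s / 2) (ltac:(lra)) (ltac:(lra)).
have [M M1 HM] := ct_bounded cOm sqm.
have [_ pM1 _ pM2] := HM _ Omp.
have HS : forall c, C_m c -> 0 <= c.1 <= M /\ 0 <= c.2 <= M.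
  by move=> c Cc; have [? ? ? ?] := HM _ (C_Om Hm' Cc); split; apply/andP; split.
have ts0 : 0 <= 1 - s / 2 by lra.
have ts1 : 1 - s / 2 <= 1 by lra.
have z1b : 0 <= (1 - s / 2) * p.1 <= M.
  by apply/andP; split; [exact: mulr_ge0 | apply: le_trans pM1; rewrite ler_piMl].
have z2b : 0 <= (1 - s / 2) * p.2 <= M.
  by apply/andP; split; [exact: mulr_ge0 | apply: le_trans pM2; rewrite ler_piMl].
have M0 : 0 <= M by apply: le_trans M1; exact: ler01.
have [m [n [m0 n0 cop key]]] := intdir l10 l20 eta0 M0 HS z1b z2b Hsep.
have := Hineq m n m0 n0 cop; rewrite /omega_action.
have mR : 1 <= (m%:R : R) by rewrite ler1n.
have nR : 1 <= (n%:R : R) by rewrite ler1n.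
have lo : m%:R * ((1 - s / 2) * p.1) + n%:R * ((1 - s / 2) * p.2) <=
    inf [set m%:R * q.1 + n%:R * q.2 | q in C_m].
  apply: lb_le_inf.
    exists (m%:R * (a_m, 0 : R).1 + n%:R * (a_m, 0 : R).2); exists (a_m, 0 : R) => //.
    have h01 : (0:R) \in `[0, 1] by rewrite in_itv /= lexx ler01.
    by rewrite Cgm -gm0; exists 0.
  by move=> v [q Cq <-]; apply: ltW; apply: key.
have hi : inf [set m%:R * q.1 + n%:R * q.2 | q in C_p] <= m%:R * y.1 + n%:R * y.2.
  apply: ge_inf; last by exists y.
  exists 0 => v [q Cq <-].
  have [q1 q2] := sqp _ (C_Om Hp' Cq).
  by apply: addr_ge0; apply: mulr_ge0.
move=> h.
have : m%:R * y.1 + n%:R * y.2 <= m%:R * ((1 - s) * p.1) + n%:R * ((1 - s) * p.2).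
  by apply: lerD; apply: ler_wpM2l.
have mp : p.1 <= m%:R * p.1 by nra.
have np : p.2 <= n%:R * p.2 by nra.
have pos : 0 < s / 2 * (m%:R * p.1 + n%:R * p.2).
  by apply: mulr_gt0; [lra | lra].
lra.
Qed.
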